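(* Let $\alpha=(\alpha_1,\ldots,\alpha_n)$ be a composition, and suppose there is $1\le r\le n-1$ with $\alpha_r<\alpha_{r+1}$. Let $\alpha'=\alpha\cdot s_r$ and $V(\gamma)=\{\beta\colon\beta\le\gamma\}$. Then \[V(\alpha)=V(\alpha')\cup\{v\cdot s_r\colon v\in V(\alpha')\}.\]
   Context: A composition is a sequence of $n$ nonnegative integers. For $v\in\mathbb{R}^n$ and $w=w_1\cdots w_n\in S_n$, $v\cdot w=(v_{w_1},\ldots,v_{w_n})$; $s_r$ is the adjacent transposition $(r,r+1)$, so $v\cdot s_r$ swaps the $r$-th and $(r+1)$-th entries. $\lambda(\gamma)$ is the weakly decreasing rearrangement of $\gamma$, and $w(\gamma)$ is the unique minimal-length permutation with $\lambda(\gamma)\cdot w(\gamma)=\gamma$. For compositions $\beta,\gamma$ of length $n$, $\beta\le\gamma$ means $\lambda(\beta)=\lambda(\gamma)$ and $w(\beta)\le w(\gamma)$ in the (strong) Bruhat order on $S_n$. *)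

(* Defs.v *)
From mathcomp Require Import all_boot all_order all_fingroup.
From Stdlib Require Import Relations.
Set Implicit Arguments. Unset Strict Implicit. Unset Printing Implicit Defensive.

(* A composition of length n: a finite function 'I_n -> nat
   (entry i, 0-indexed, is alpha_{i+1}). *)
Definition compo (n : nat) := {ffun 'I_n -> nat}.

Definition cact n (v : compo n) (w : 'S_n) : compo n := [ffun i => v (w i)].

Definition lam n (g : compo n) : compo n :=
  [ffun i : 'I_n => nth 0 (sort geq (codom g)) i].

Definition plen n (w : 'S_n) : nat :=
  #|[set p : 'I_n * 'I_n | (p.1 < p.2) && (w p.2 < w p.1)]|.

Definition is_minperm n (g : compo n) (w : 'S_n) : bool :=
  (cact (lam g) w == g) &&
  [forall w' : 'S_n, (cact (lam g) w' == g) ==> (plen w <= plen w')].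

Definition wperm n (g : compo n) : 'S_n := odflt 1%g [pick w | is_minperm g w].

Definition bruhat_step n (w v : 'S_n) : Prop :=
  exists i j : 'I_n, i != j /\ (forall k, v k = w (tperm i j k)) /\ plen w < plen v.

Definition bruhat_le n : relation 'S_n := clos_refl_trans _ (@bruhat_step n).

Definition comp_le n (b g : compo n) : Prop :=
  lam b = lam g /\ bruhat_le (wperm b) (wperm g).

Definition Vset n (g : compo n) : compo n -> Prop := fun b => comp_le b g.

(* Main.v *)
Require Import Defs.
From mathcomp Require Import all_boot all_order all_fingroup.
From mathcomp Require Import zify.
Set Implicit Arguments. Unset Strict Implicit. Unset Printing Implicit Defensive.

Section L.
Variable n : nat.
Implicit Types (x y : 'S_n) (i j : 'I_n).

Definition invs x := [set p : 'I_n * 'I_n | (p.1 < p.2) && (x p.2 < x p.1)].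

Lemma plenE x : plen x = #|invs x|. Proof. by []. Qed.

Lemma lenL x i j : i < j -> x i < x j -> plen x < plen (tperm i j * x)%g.
Proof.
move=> lij lx; set y := (tperm i j * x)%g; set t := tperm i j.
have yE k : y k = x (t k) by rewrite permM.
pose f (p : 'I_n * 'I_n) := if t p.1 < t p.2 then (t p.1, t p.2) else p.
have finj : {in invs x &, injective f}.
  move=> [a b] [c d]; rewrite !inE /= /f /=.
  move=> /andP[ab _] /andP[cd _].
  case: ifP => h1; case: ifP => h2 //.
  - by case=> /(can_inj (tpermK i j)) -> /(can_inj (tpermK i j)) ->.
  - by case=> e1 e2; move: h2; rewrite -e1 -e2 !tpermK ab.
  - by case=> e1 e2; move: h1; rewrite e1 e2 !tpermK cd.
have sub : f @: invs x \subset invs y :\ (i, j).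
  apply/subsetP=> q /imsetP[[a b]]; rewrite !inE /= => /andP[ab xab] ->.
  rewrite /f /=; case: ifP => h.
    idtac.
rewrite /= h !yE !tpermK xab; apply/and3P; split => //.
    apply/eqP; case=> e1 e2; move: h; rewrite e1 e2.
    by move: ab; rewrite -(tpermK i j a) -(tpermK i j b) e1 e2 tpermL tpermR; lia.
  rewrite /= ab /= !yE.
  apply/andP; split.
    by apply/eqP; case=> e1 e2; move: xab; rewrite e1 e2; lia.
  move: h; rewrite /t.
  case: (tpermP i j a) => [ea|ea|na1 na2]; case: (tpermP i j b) => [eb|eb|nb1 nb2];
    subst; lia.
have inij : (i, j) \in invs y by rewrite inE /= !yE tpermL tpermR lx andbT.
rewrite !plenE -(card_in_imset finj) (cardsD1 (i, j) (invs y)) inij.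
by rewrite add1n ltnS subset_leq_card.
Qed.

End L.
Lemma ord_neq n (a b : 'I_n) : a != b -> nat_of_ord a <> nat_of_ord b.
Proof. by move=> /eqP h e; apply: h; apply: val_inj. Qed.

Ltac neq := apply/eqP => /(congr1 (@nat_of_ord _)); lia.
Ltac tpsimp := repeat match goal with
  | |- context[fun_of_perm (tperm ?a ?b) ?a] => rewrite (@tpermL _ a b)
  | |- context[fun_of_perm (tperm ?a ?b) ?b] => rewrite (@tpermR _ a b)
  | |- context[fun_of_perm (tperm ?a ?b) ?c] => rewrite (@tpermD _ a b c); [|neq|neq]
  end.
Ltac kcase k p := case: (eqVneq k p) => [->|/ord_neq ?].

From Stdlib Require Import Relations.

Section B.
Variable n : nat.
Variables r r1 : 'I_n.
Hypothesis hr : nat_of_ord r1 = r.+1.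
Local Notation s := (tperm r r1).
Local Notation asc u := (u r < u r1).
Implicit Types (x m u w : 'S_n) (i j : 'I_n).

Lemma stepL x i j : i < j -> x i < x j -> bruhat_step x (tperm i j * x)%g.
Proof.
move=> lij lx; exists i, j; split; first by neq.
by split=> [k|]; [rewrite permM | exact: lenL].
Qed.

Lemma lenL' x i j : i < j -> plen x < plen (tperm i j * x)%g -> x i < x j.
Proof.
move=> lij hl; case: (ltngtP (x i) (x j)) => // [h|/val_inj/perm_inj e]; last first.
  by move: lij; rewrite e ltnn.
have := lenL (x := (tperm i j * x)%g) lij; rewrite !permM tpermL tpermR => /(_ h).
by rewrite mulgA tperm2 mul1g; lia.
Qed.

Lemma sK x : (s * (s * x))%g = x.
Proof. by rewrite mulgA tperm2 mul1g. Qed.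

Lemma ascS x : asc (s * x)%g = ~~ asc x.
Proof.
rewrite !permM tpermL tpermR; case: (ltngtP (x r) (x r1)) => //.
by move=> /val_inj/perm_inj e; move: hr; rewrite e; lia.
Qed.

Lemma rr1 : r < r1. Proof. lia. Qed.

Lemma stepS x : asc x -> bruhat_step x (s * x)%g.
Proof. by move=> h; apply: stepL => //; exact: rr1. Qed.

Lemma stepS' x : ~~ asc x -> bruhat_step (s * x)%g x.
Proof. by move=> h; rewrite -{2}(sK x); apply: stepS; rewrite ascS. Qed.

Lemma step_len x y : bruhat_step x y -> plen x < plen y.
Proof. by case=> i [j [_ [_ h]]]. Qed.

Lemma stepE m w : bruhat_step m w ->
  exists i j, [/\ i < j, w = (tperm i j * m)%g & m i < m j].
Proof.
case=> i [j [nij [wE hl]]].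
have wE' : w = (tperm i j * m)%g by apply/permP => k; rewrite permM wE.
case: (ltngtP i j) => [lij|lji|/val_inj e]; last by rewrite e eqxx in nij.
  by exists i, j; split => //; apply: lenL' => //; rewrite -wE'.
exists j, i; rewrite [tperm j i]tpermC -wE'; split => //.
by apply: lenL' => //; rewrite tpermC -wE'.
Qed.

Lemma stepA m w : bruhat_step m w -> asc m = asc w -> bruhat_le (s * m)%g (s * w)%g.
Proof.
move=> /stepE [i [j [lij -> lm]]] ha.
case: (ltngtP (s i) (s j)) => [h|h|/val_inj/perm_inj e].
- apply: rt_step.
  have -> : (s * (tperm i j * m) = tperm (s i) (s j) * (s * m))%g.
    rewrite -tpermJ /conjg tpermV.
    by rewrite !mulgA -(mulgA _ s s) tperm2 mulg1.
  by apply: stepL => //; rewrite !permM !tpermK.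
- have [ei ej] : i = r /\ j = r1.
    move: h lij; kcase i r; last kcase i r1; kcase j r; try kcase j r1; tpsimp; try lia;
    by split => //; apply: val_inj => /=; lia.
  by move: ha; rewrite ei ej ascS; case: (asc m).
- by move: lij; rewrite e ltnn.
Qed.

Lemma stepB m w : bruhat_step m w -> asc m -> ~~ asc w -> bruhat_le m (s * w)%g.
Proof.
move=> /stepE [i [j [lij -> lm]]] am aw.
case: (eqVneq i r) => [ei|/ord_neq nir]; [subst i|];
  case: (eqVneq j r1) => [ej|/ord_neq njr1]; [subst j| |subst j|].
- by rewrite sK; exact: rt_refl.
- apply: (rt_trans _ _ _ (s * m)%g); first exact/rt_step/stepS.
  have -> : (s * (tperm r j * m) = tperm r1 j * (s * m))%g.
    rewrite !mulgA; congr (_ * _)%g; apply/permP => k; rewrite !permM.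
    kcase k r; last kcase k r1; last kcase k j; tpsimp => //.
  apply/rt_step/stepL; first lia.
  by move: lm; rewrite !permM; tpsimp.
- apply: (rt_trans _ _ _ (s * m)%g); first exact/rt_step/stepS.
  have -> : (s * (tperm i r1 * m) = tperm i r * (s * m))%g.
    rewrite !mulgA; congr (_ * _)%g; apply/permP => k; rewrite !permM.
    kcase k r; last kcase k r1; last kcase k i; tpsimp => //.
  apply/rt_step/stepL; first lia.
  by move: lm; rewrite !permM; tpsimp.
- exfalso; move: aw am lm; rewrite !permM.
  case: (eqVneq i r1) => [ei|/ord_neq nir1]; [subst i|];
  case: (eqVneq j r) => [ej|/ord_neq njr]; [subst j| |subst j|]; tpsimp; lia.
Qed.

Definition PZ u w := (asc u = asc w -> bruhat_le (s * u)%g (s * w)%g) /\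
                     (asc u -> ~~ asc w -> bruhat_le u (s * w)%g).

Lemma Zgen N : forall u w, plen w < N -> bruhat_le u w -> PZ u w.
Proof.
elim: N => // N IH u w hw /clos_rt_rtn1_iff H.
case: H hw => [|m w' st ch] hw.
  by split=> [_|-> //]; exact: rt_refl.
have um : bruhat_le u m by apply/clos_rt_rtn1_iff.
have lm := step_len st.
have [IHa IHb] := IH u m (leq_trans lm hw) um.
split.
- case Au: (asc u); case Am: (asc m); case Aw: (asc w') => // _.
  + apply: rt_trans (IHa _) (stepA st _); by rewrite ?Au ?Am ?Aw.
  + have ums := IHb Au (negbT Am).
    have ms : ~~ asc m by rewrite Am.
    have lms : plen (s * m)%g < N.
      by have := step_len (stepS' ms); lia.
    have [IH2a _] := IH u (s * m)%g lms ums.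
    have h : bruhat_le (s * u)%g (s * (s * m))%g by apply: IH2a; rewrite ascS Au Am.
    rewrite sK in h; apply: rt_trans h _; apply: rt_trans (rt_step _ _ _ _ st) _.
    by apply/rt_step/stepS; rewrite Aw.
  + apply: rt_trans (rt_step _ _ _ _ (stepS' _)) _; first by rewrite Au.
    apply: rt_trans um _; apply: stepB => //; by rewrite ?Am ?Aw.
  + apply: rt_trans (IHa _) (stepA st _); by rewrite ?Au ?Am ?Aw.
- move=> Au Aw; case Am: (asc m).
  + by apply: rt_trans um (stepB st _ _); rewrite ?Am.
  + apply: rt_trans (IHb Au _) (stepA st _); by rewrite ?Am ?(negbTE Aw).
Qed.

Lemma Z u w : bruhat_le u w -> PZ u w.
Proof. exact: (Zgen (N := (plen w).+1)). Qed.

End B.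
Section Comp.
Variable n : nat.
Implicit Types (g : compo n) (w x : 'S_n).

Lemma geq_trans : forall y x z : nat, geq x y -> geq y z -> geq x z. Proof. by move=> a b c h1 h2; apply: leq_trans h2 h1. Qed.

Lemma size_S g : size (sort geq (codom g)) = n.
Proof. by rewrite size_sort size_codom card_ord. Qed.

Lemma lam_mono g (i j : 'I_n) : i <= j -> lam g j <= lam g i.
Proof.
move=> ij; rewrite !ffunE.
have := @sorted_leq_nth _ geq geq_trans (@leqnn) 0 (sort geq (codom g)).
move=> /(_ (sort_sorted (fun a b => leq_total b a) _)).
by move=> /(_ i j); apply; rewrite ?inE ?size_S.
Qed.

Lemma lam_cact g w : lam (cact g w) = lam g.
Proof.
apply/ffunP => i; rewrite !ffunE; congr nth.
apply/perm_sortP.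
- by move=> a b; apply: leq_total.
- exact: geq_trans.
- by move=> a b h; apply: anti_leq; rewrite andbC.
rewrite !codomE.
have -> : [seq cact g w i | i <- enum 'I_n] = map g (map w (enum 'I_n)).
  by elim: (enum _) => //= a l ->; rewrite ffunE.
apply: perm_map; apply: uniq_perm.
- by rewrite map_inj_uniq ?enum_uniq //; exact: perm_inj.
- exact: enum_uniq.
- move=> y; rewrite mem_enum inE; rewrite -[y](permKV w).
  by rewrite map_f // mem_enum.
Qed.

Lemma exists_rep g : exists w, cact (lam g) w = g.
Proof.
pose t := [tuple g i | i < n].
have : perm_eq (sort geq (codom g)) t.
  rewrite perm_sort codomE /=.
  by rewrite /t /= enumT unlock.
case/tuple_permP => p hp.
exists p^-1%g; apply/ffunP => k; rewrite !ffunE hp.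
rewrite (nth_map (p^-1 k)%g); last by rewrite size_enum_ord.
by rewrite -tnth_nth tnth_ord_tuple /t tnth_mktuple permKV.
Qed.


Lemma wperm_min g : is_minperm g (wperm g).
Proof.
rewrite /wperm; case: pickP => [w // | none].
have [w0 h0] := exists_rep g.
pose P := fun w => cact (lam g) w == g.
have h0' : P w0 by apply/eqP.
case: (@arg_minnP _ w0 P (@plen n) h0') => w Pw minw.
have := none w; rewrite /is_minperm.
move/negbT/negP; case; apply/andP; split; first exact: Pw.
apply/forallP => w'; apply/implyP; exact: minw.
Qed.

Definition hk g w := forall k, lam g (w k) = g k.
Definition hb g w := forall p q : 'I_n, p < q -> g p = g q -> w p < w q.

Lemma min_hk g w : is_minperm g w -> hk g w.
Proof. rewrite /is_minperm => /andP[/eqP hw _] k. by have := congr1 (fun f : compo n => f k) hw; rewrite ffunE. Qed.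

Lemma mono_w g w a b : hk g w -> g a < g b -> w b < w a.
Proof.
move=> h lt; rewrite ltnNge; apply/negP => hab.
by have := lam_mono g hab; rewrite (h a) (h b); lia.
Qed.

Lemma min_hb g w : is_minperm g w -> hb g w.
Proof.
move=> hm p q pq e; have hkw : forall k, lam g (w k) = g k := min_hk hm.
move: hm; rewrite /is_minperm => /andP[_ /forallP hmin].
case: (ltngtP (w p) (w q)) => // [h|/val_inj/perm_inj epq]; last first.
  by move: pq; rewrite epq ltnn.
pose w' := (tperm p q * w)%g.
have hw' : cact (lam g) w' = g.
  apply/ffunP => k; rewrite ffunE permM.
  by case: tpermP => [->|->|_ _]; rewrite hkw ?e.
have := hmin w'; rewrite hw' eqxx /=.
have := lenL (x := w') pq; rewrite !permM tpermL tpermR => /(_ h).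
by rewrite mulgA tperm2 mul1g; lia.
Qed.

Lemma charac g w (h1 : hk g w) (h2 : hb g w) (k p : 'I_n) :
  (w p < w k) = (g k < g p) || ((g p == g k) && (p < k)).
Proof.
case: (ltngtP (g k) (g p)) => h /=.
- by rewrite (mono_w h1 h).
- rewrite ?(ltn_eqF h) /=; apply/negbTE; rewrite -leqNgt; apply: ltnW.
  exact: mono_w h1 h.
- rewrite ?h ?eqxx /=; case: (ltngtP p k) => [pk|kp|/val_inj ->]; last by rewrite ltnn.
  + exact: h2.
  + by apply/negbTE; rewrite -leqNgt; apply: ltnW; apply: h2.
Qed.

Lemma card_lt (x : 'S_n) k : #|[set p | x p < x k]| = #|[set y : 'I_n | y < x k]|.
Proof.
rewrite -[RHS](card_preimset _ (@perm_inj _ x)).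
by apply: eq_card => p; rewrite !inE.
Qed.

Lemma uniq_rep g w1 w2 : hk g w1 -> hb g w1 -> hk g w2 -> hb g w2 -> w1 = w2.
Proof.
move=> a1 b1 a2 b2; apply/permP => k.
have E : [set p | w1 p < w1 k] = [set p | w2 p < w2 k].
  by apply/setP => p; rewrite !inE (charac a1 b1) (charac a2 b2).
have C : #|[set y : 'I_n | y < w1 k]| = #|[set y : 'I_n | y < w2 k]|.
  by rewrite -(card_lt w1) -(card_lt w2) E.
have key (a b : 'I_n) : a < b -> #|[set y : 'I_n | y < a]| < #|[set y : 'I_n | y < b]|.
  move=> ab; apply: proper_card; apply/properP; split.
    by apply/subsetP => y; rewrite !inE => /ltn_trans; apply.
  by exists a; rewrite !inE ?ltnn.
case: (ltngtP (w1 k) (w2 k)) => [h|h|/val_inj //]; have := key _ _ h; rewrite C ltnn //.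
Qed.

Lemma wperm_char g w : hk g w -> hb g w -> wperm g = w.
Proof.
move=> a b; have m := wperm_min g.
exact: uniq_rep (min_hk m) (min_hb m) a b.
Qed.

Lemma asc_w g (r r1 : 'I_n) : r < r1 -> (wperm g r < wperm g r1) = (g r1 <= g r).
Proof.
move=> rr; have m := wperm_min g; have a := min_hk m; have b := min_hb m.
case: (ltngtP (g r1) (g r)) => h.
- by rewrite (mono_w a h).
- apply/negbTE; rewrite -leqNgt; apply: ltnW; exact: mono_w a h.
- by apply: b; rewrite // h.
Qed.

End Comp.

Lemma s_rev n (r r1 i j : 'I_n) : nat_of_ord r1 = r.+1 -> i < j ->
  tperm r r1 j < tperm r r1 i -> i = r /\ j = r1.
Proof.
move=> hr lij h; move: h lij; kcase i r; last kcase i r1; kcase j r; try kcase j r1; tpsimp; try lia;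
by split => //; apply: val_inj => /=; lia.
Qed.

Lemma wperm_s n (g : compo n) (r r1 : 'I_n) : nat_of_ord r1 = r.+1 -> g r != g r1 ->
  wperm (cact g (tperm r r1)) = (tperm r r1 * wperm g)%g.
Proof.
move=> hr ne; have m := wperm_min g.
have a : forall k, lam g (wperm g k) = g k := min_hk m.
have b := min_hb m.
apply: wperm_char.
- by move=> k; rewrite lam_cact permM a ffunE.
- move=> p q pq; rewrite !ffunE !permM => e.
  case: (ltngtP (tperm r r1 p) (tperm r r1 q)) => [h|h|/val_inj/perm_inj epq].
  + exact: b.
  + have [ep eq] := s_rev hr pq h; subst p q.
    by move: e ne; rewrite tpermL tpermR => ->; rewrite eqxx.
  + by move: pq; rewrite epq ltnn.
Qed.

Theorem proposition4p3 (n : nat) (alpha : compo n) (r r1 : ordinal n)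
  (hr : val r1 = (val r).+1) (hlt : alpha r < alpha r1) :
  let alpha' := cact alpha (tperm r r1) in
  forall beta : compo n,
    Vset alpha beta <->
    (Vset alpha' beta \/ exists v : compo n, Vset alpha' v /\ beta = cact v (tperm r r1)).
Proof.
move=> alpha' beta.
have hr' : nat_of_ord r1 = r.+1 := hr.
have rr : r < r1 by lia.
set s := tperm r r1 in alpha' *.
have ne : alpha r != alpha r1 by rewrite neq_ltn hlt.
have hW' : wperm alpha' = (s * wperm alpha)%g := wperm_s hr' ne.
have AW : (wperm alpha r < wperm alpha r1) = false by rewrite asc_w // leqNgt hlt.
have hl' : lam alpha' = lam alpha by rewrite lam_cact.
have AW' : wperm alpha' r < wperm alpha' r1 by rewrite hW' ascS // AW.
have stW : bruhat_step (wperm alpha') (wperm alpha).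
  have -> : wperm alpha = (s * wperm alpha')%g by rewrite hW' sK.
  exact: stepS.
have cK (v : compo n) : cact (cact v s) s = v.
  by apply/ffunP => k; rewrite !ffunE tpermK.
split.
- move=> [hl hle].
  have [Za Zb] := Z hr' hle.
  case AB: (wperm beta r < wperm beta r1).
    left; split; first by rewrite hl hl'.
    by rewrite hW'; apply: Zb; rewrite ?AB ?AW.
  right; exists (cact beta s); split; last by rewrite cK.
  have nb : beta r != beta r1.
    by move: AB; rewrite asc_w // neq_ltn => /negbT; rewrite -ltnNge => ->.
  split; first by rewrite lam_cact hl hl'.
  by rewrite (wperm_s hr' nb) hW'; apply: Za; rewrite AB AW.
- case=> [[hl hle]|[v [[hlv hlev] ->]]].
    split; first by rewrite hl hl'.
    exact: rt_trans hle (rt_step _ _ _ _ stW).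
  split; first by rewrite lam_cact hlv hl'.
  case: (eqVneq (v r) (v r1)) => e.
    have -> : cact v s = v.
      apply/ffunP => k; rewrite ffunE.
      by case: tpermP => [->|->|_ _]; rewrite ?e.
    exact: rt_trans hlev (rt_step _ _ _ _ stW).
  rewrite (wperm_s hr' e).
  case AV: (wperm v r < wperm v r1).
    have [Za _] := Z hr' hlev.
    have := Za (etrans AV (esym AW')); rewrite hW' sK //.
  apply: rt_trans (rt_step _ _ _ _ (stepS' hr' _)) _; first by rewrite AV.
  exact: rt_trans hlev (rt_step _ _ _ _ stW).
Qed.
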